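(* Let $\tau$ be a non-scalar tame inertial type, $(J,r)$ a maximal refined shape for $\tau$, and $\mathfrak{P}\in\mathrm{Ext}^1_{\mathbb F}(\mathfrak{M},\mathfrak{N})$ an extension of type $\tau$ and refined shape $(J,r)$ (where $(\mathfrak M,\mathfrak N)$ is a pair of rank one modules of refined shape $(J,r)$). Let $D=D(\mathfrak{P})$ be its Dieudonné module. Then for each $i\in\mathbb{Z}/f'\mathbb{Z}$: if $i\in J$ then $F=0$ on $D_{\eta,i-1}$, and if $i\notin J$ then $V=0$ on $D_{\eta,i}$.
   Context: Setup. $p$ odd prime, $K/\mathbb Q_p$ finite with residue field of size $p^f$, ramification index $e$; $L/K$ unramified quadratic; $\pi$ uniformiser of $K$. $\tau=\eta\oplus\eta'$ non-scalar tame inertial type (ordering fixed): principal series ($\eta\ne\eta'$ both extend to $G_K$) or cuspidal ($\eta'=\eta^{p^f}\ne\eta$, $\eta$ extends to $G_L$). $K'=K(\pi^{1/(p^f-1)})$, $f'=f$, or $K'=L(\pi^{1/(p^{2f}-1)})$, $f'=2f$; $k'$ residue field of $K'$; $e'=e(p^{f'}-1)$; $\pi'=\pi^{1/(p^{f'}-1)}$; $E(u)$ its minimal polynomial over $W(k')[1/p]$; $h(g)\in k'$ reduction of $g(\pi')/\pi'$. $\mathbb F$ finite field containing images of $k'$ and of $\bar\eta,\bar\eta'$; $\sigma_i:k'\hookrightarrow\mathbb F$, $\sigma_{i+1}^p=\sigma_i$; $e_i\in k'\otimes\mathbb F$ the idempotents with $(x\otimes1)e_i=(1\otimes\sigma_i(x))e_i$.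 $k_i,k'_i\in\mathbb Z/(p^{f'}-1)$ with $\bar\eta=\sigma_i\circ h^{k_i}$, $\bar\eta'=\sigma_i\circ h^{k'_i}$ on $I(K'/K)$; $[n]$ least non-negative residue mod $p^{f'}-1$. Rank one modules $\mathfrak M(r,a,c)$ over $\mathfrak S_\mathbb F=(k'\otimes\mathbb F)[[u]]$: $e_i\mathfrak M=\mathbb F[[u]]m_i$, $\Phi(1\otimes m_{i-1})=a_iu^{r_i}m_i$, $\hat g(\sum m_i)=\sum h(g)^{c_i}m_i$. A pair $(\mathfrak M(r,a,c),\mathfrak M(s,b,d))$ has type $\tau$ if $\{c_i,d_i\}=\{k_i,k'_i\}$ and $r_i+s_i=e'$; its shape is $J=\{i:c_i=k_i\}$ and refined shape $(J,r)$; $(i-1,i)$ is a transition if exactly one of $i-1,i$ lies in $J$; $(J,r)$ is maximal if $r_i=e'$ at non-transitions and $r_i=e'-[c_i-d_i]$ at transitions. $\mathrm{Ext}^1_{\mathbb F}$ is taken in the category of $\mathfrak S_\mathbb F$-modules with $\varphi$-semilinear endomorphism and commuting semilinear descent data; every such extension $\mathfrak P$ of this pair is a rank two Breuil–Kisin module of height $\le1$ and type $\tau$. Dieudonné module: $D(\mathfrak P)=\mathfrak P/u\mathfrak P$ with the induced $\mathrm{Gal}(K'/K)$-action, $F$ induced by $\varphi_\mathfrak P$, and $V=c^{-1}\mathfrak V \bmod u$, where $E(0)=cp$ and $\mathfrak V$ is the unique map with $\mathfrak V\circ\varphi_{\mathfrak P}=E(u)$. $D_\eta$ is the submodule on which $I(K'/K)$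 acts via $\bar\eta$, and $D_{\eta,i}=e_iD_\eta$; $F$ maps $D_{\eta,i}\to D_{\eta,i+1}$ and $V$ maps $D_{\eta,i+1}\to D_{\eta,i}$. *)

(* Defs.v *)
(* Concrete model of rank-two Breuil-Kisin modules with
   (inertial) descent data over S_F = (k' (x) F)[[u]], presented componentwise
   via the idempotents e_i, in a basis adapted to an extension. *)
From mathcomp Require Import all_boot all_algebra.
Set Implicit Arguments.
Unset Strict Implicit.
Unset Printing Implicit Defensive.
Import GRing.Theory.
Local Open Scope ring_scope.

Definition ps (F : fieldType) := nat -> F.

Definition ps_add (F : fieldType) (x y : ps F) : ps F := fun n => x n + y n.
Definition ps_mul (F : fieldType) (x y : ps F) : ps F :=
  fun n => \sum_(k < n.+1) x k * y (n - k)%N.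
Definition ps_const (F : fieldType) (a : F) : ps F :=
  fun n => if n is 0%N then a else 0.
Definition ps_upow (F : fieldType) (m : nat) : ps F :=
  fun n => if n == m then 1 else 0.
(* x(u) |-> x(l u) *)
Definition ps_scal (F : fieldType) (l : F) (x : ps F) : ps F :=
  fun n => l ^+ n * x n.
(* x(u) |-> x(u^p) *)
Definition ps_frob (F : fieldType) (p : nat) (x : ps F) : ps F :=
  fun n => if (n %% p == 0)%N then x (n %/ p)%N else 0.

(* ---------- free rank-two F[[u]]-modules with a fixed basis (n, m) ----------
   a vector is the pair of its coordinates on (n, m). *)
Definition vec (F : fieldType) := (ps F * ps F)%type.

Record mat2 (F : fieldType) := Mat2 { m11 : ps F; m12 : ps F; m21 : ps F; m22 : ps F }.

Definition mapp (F : fieldType) (A : mat2 F) (v : vec F) : vec F :=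
  (ps_add (ps_mul (m11 A) v.1) (ps_mul (m12 A) v.2),
   ps_add (ps_mul (m21 A) v.1) (ps_mul (m22 A) v.2)).

Definition mat_frob (F : fieldType) (p : nat) (A : mat2 F) : mat2 F :=
  Mat2 (ps_frob p (m11 A)) (ps_frob p (m12 A)) (ps_frob p (m21 A)) (ps_frob p (m22 A)).

Definition vscal (F : fieldType) (l : F) (v : vec F) : vec F :=
  (ps_scal l v.1, ps_scal l v.2).
Definition vupow (F : fieldType) (e : nat) (v : vec F) : vec F :=
  (ps_mul (ps_upow F e) v.1, ps_mul (ps_upow F e) v.2).
Definition vconst (F : fieldType) (v : F * F) : vec F := (ps_const v.1, ps_const v.2).
Definition vat0 (F : fieldType) (v : vec F) : F * F := (v.1 0%N, v.2 0%N).

(* least non-negative residue [c - d] modulo q *)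
Definition lres_sub (q c d : nat) : nat := ((c + (q - d %% q)) %% q)%N.

(* ---------- the extension P in Ext^1(M(r,a,c), M(s,b,d)) ----------
   e_i P = F[[u]] n_i (+) F[[u]] m_i, n_i spanning the sub M(s,b,d),
   m_i lifting the basis of the quotient M(r,a,c).
   Phi_i : phi^*(e_{i-1}P) -> e_i P  (matrix w.r.t. 1(x)n_{i-1}, 1(x)m_{i-1}):
     Phi(1(x)n_{i-1}) = b_i u^{s_i} n_i,
     Phi(1(x)m_{i-1}) = a_i u^{r_i} m_i + x_i n_i.
   For g in I(K'/K) with w = h(g) in k'^x, hat g on e_i P is the
   semilinear map (u |-> sigma_i(w) u) with
     hat g(n_i) = sigma_i(w)^{d_i} n_i,
     hat g(m_i) = sigma_i(w)^{c_i} m_i + y_i(w) n_i. *)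

Definition Phi_mat (F : fieldType) (f' : nat) (r s : 'I_f' -> nat) (a b : 'I_f' -> F)
  (x : 'I_f' -> ps F) (i : 'I_f') : mat2 F :=
  Mat2 (ps_mul (ps_const (b i)) (ps_upow F (s i))) (x i)
       (ps_const 0) (ps_mul (ps_const (a i)) (ps_upow F (r i))).

Definition G_mat (F : finFieldType) (k' : finFieldType) (f' : nat)
  (sigma : 'I_f' -> {rmorphism k' -> F}) (c d : 'I_f' -> nat)
  (y : 'I_f' -> k' -> ps F) (i : 'I_f') (w : k') : mat2 F :=
  Mat2 (ps_const (sigma i w ^+ d i)) (y i w)
       (ps_const 0) (ps_const (sigma i w ^+ c i)).

Definition G_act (F : finFieldType) (k' : finFieldType) (f' : nat)
  (sigma : 'I_f' -> {rmorphism k' -> F}) (c d : 'I_f' -> nat)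
  (y : 'I_f' -> k' -> ps F) (i : 'I_f') (w : k') (v : vec F) : vec F :=
  mapp (G_mat sigma c d y i w) (vscal (sigma i w) v).

(* hat g on e_i (phi^* P) = phi^*(e_{i-1} P):  s (x) z |-> g(s) (x) hat g(z) *)
Definition Gphi_act (F : finFieldType) (k' : finFieldType) (p f' : nat)
  (sigma : 'I_f' -> {rmorphism k' -> F}) (c d : 'I_f' -> nat)
  (y : 'I_f' -> k' -> ps F) (i : 'I_f') (w : k') (v : vec F) : vec F :=
  mapp (mat_frob p (G_mat sigma c d y (ord_pred i) w)) (vscal (sigma i w) v).

(* the data (x, y) define an object: descent data is an action of I(K'/K)
   (~ k'^x via h) commuting with Phi. *)
Definition is_extension (F : finFieldType) (k' : finFieldType) (p f' : nat)
  (sigma : 'I_f' -> {rmorphism k' -> F})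
  (r s : 'I_f' -> nat) (a b : 'I_f' -> F) (c d : 'I_f' -> nat)
  (x : 'I_f' -> ps F) (y : 'I_f' -> k' -> ps F) : Prop :=
  [/\ forall i, a i != 0 /\ b i != 0,
      forall i v, G_act sigma c d y i 1 v = v,
      forall i w w' v, w != 0 -> w' != 0 ->
        G_act sigma c d y i w (G_act sigma c d y i w' v) = G_act sigma c d y i (w * w') v
    & forall i w v, w != 0 ->
        mapp (Phi_mat r s a b x i) (Gphi_act p sigma c d y i w v)
        = G_act sigma c d y i w (mapp (Phi_mat r s a b x i) v)].

(* ---------- the Dieudonne module D = P/uP ---------- *)
(* F : D_{i-1} -> D_i *)
Definition D_F (F : fieldType) (f' : nat) (r s : 'I_f' -> nat) (a b : 'I_f' -> F)
  (x : 'I_f' -> ps F) (i : 'I_f') (v : F * F) : F * F :=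
  vat0 (mapp (Phi_mat r s a b x i) (vconst v)).

(* the map frak V_i : e_i P -> phi^*(e_{i-1}P) is given by a matrix W with
   W o Phi_i = E(u) = u^{e'} (E(u) reduces to u^{e'} in S_F);
   V = c^{-1} frak V mod u : D_i -> D_{i-1}, c^{-1} acting on component i
   through sigma_i. *)
Definition is_frakV (F : fieldType) (f' e' : nat) (r s : 'I_f' -> nat) (a b : 'I_f' -> F)
  (x : 'I_f' -> ps F) (i : 'I_f') (W : mat2 F) : Prop :=
  forall v, mapp W (mapp (Phi_mat r s a b x i) v) = vupow e' v.

Definition D_V (F : finFieldType) (k' : finFieldType) (f' : nat)
  (sigma : 'I_f' -> {rmorphism k' -> F}) (cbar : k') (i : 'I_f') (W : mat2 F)
  (v : F * F) : F * F :=
  let l := (sigma i cbar)^-1 in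
  let z := vat0 (mapp W (vconst v)) in (l * z.1, l * z.2).

Definition in_D_eta (F : finFieldType) (k' : finFieldType) (f' : nat)
  (sigma : 'I_f' -> {rmorphism k' -> F}) (c d : 'I_f' -> nat)
  (y : 'I_f' -> k' -> ps F) (etab : k' -> F) (i : 'I_f') (v : F * F) : Prop :=
  forall w : k', w != 0 ->
    vat0 (G_act sigma c d y i w (vconst v)) = (etab w * v.1, etab w * v.2).

(* tau = eta (+) eta' non-scalar: principal series (f' = f) or cuspidal
   (f' = 2f, eta' = eta^{p^f} != eta); etab, etab' are the reductions,
   viewed on I(K'/K) ~ k'^x via h. *)
Definition tame_type (F : finFieldType) (k' : finFieldType) (p f f' : nat)
  (etab etab' : k' -> F) : Prop :=
  (exists2 w : k', w != 0 & etab w != etab' w) /\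
  ((f' = f) \/ (f' = (2 * f)%N /\ forall w : k', w != 0 -> etab' w = etab w ^+ (p ^ f))).

Definition transition (f' : nat) (J : 'I_f' -> bool) (i : 'I_f') : bool :=
  J (ord_pred i) != J i.

Definition maximal_shape (f' e' q : nat) (J : 'I_f' -> bool) (r c d : 'I_f' -> nat) : Prop :=
  forall i, r i = (if transition J i then e' - lres_sub q (c i) (d i) else e')%N.

(* Main.v *)
Require Import Defs.
From mathcomp Require Import all_boot all_algebra.
From mathcomp Require Import finfield zify.
Import GRing.Theory.
Local Open Scope ring_scope.

Section Helpers.
Variable F : fieldType.

Lemma ps_mul_delta_r (x y : ps F) (m : nat) (be : F) n :
  (forall k, y k = if k == m then be else 0) ->
  ps_mul x y n = if (m <= n)%N then x (n - m)%N * be else 0.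
Proof.
move=> hy; rewrite /ps_mul; case: leqP => hmn.
  have hlt : (n - m < n.+1)%N by lia.
  rewrite (bigD1 (Ordinal hlt)) //= hy.
  have -> : (n - (n - m))%N == m by apply/eqP; lia.
  rewrite big1 ?addr0 // => k hk; rewrite hy.
  case: eqP => [h|]; last by rewrite mulr0.
  exfalso; move/eqP: hk; apply; apply/val_inj => /=.
  have := ltn_ord k; lia.
rewrite big1 // => k _; rewrite hy.
case: eqP => [h|]; last by rewrite mulr0.
exfalso; have := ltn_ord k; lia.
Qed.

Lemma ps_mul_delta_l (x y : ps F) (m : nat) (be : F) n :
  (forall k, x k = if k == m then be else 0) ->
  ps_mul x y n = if (m <= n)%N then be * y (n - m)%N else 0.
Proof.
move=> hx; rewrite /ps_mul; case: leqP => hmn.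
  have hlt : (m < n.+1)%N by lia.
  rewrite (bigD1 (Ordinal hlt)) //= hx eqxx.
  rewrite big1 ?addr0 // => k hk; rewrite hx.
  case: eqP => [h|]; last by rewrite mul0r.
  exfalso; move/eqP: hk; apply; apply/val_inj => /=; lia.
rewrite big1 // => k _; rewrite hx.
case: eqP => [h|]; last by rewrite mul0r.
exfalso; have := ltn_ord k; lia.
Qed.

Lemma ps_const_delta (a : F) k : ps_const a k = if k == 0%N then a else 0.
Proof. by case: k. Qed.

Lemma ps_upow_delta m k : ps_upow F m k = if k == m then 1 else 0.
Proof. by []. Qed.

Lemma ps_mul_const_r (x : ps F) a n : ps_mul x (ps_const a) n = x n * a.
Proof. by rewrite (@ps_mul_delta_r _ _ 0 a) ?subn0 // => k; apply: ps_const_delta. Qed.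

Lemma ps_mul_const_l (x : ps F) a n : ps_mul (ps_const a) x n = a * x n.
Proof. by rewrite (@ps_mul_delta_l _ _ 0 a) ?subn0 // => k; apply: ps_const_delta. Qed.

Lemma ps_mul0 (x y : ps F) : ps_mul x y 0 = x 0%N * y 0%N.
Proof. by rewrite /ps_mul big_ord1. Qed.

Definition mul0 (A : mat2 F) (z : F * F) : F * F :=
  (m11 A 0%N * z.1 + m12 A 0%N * z.2, m21 A 0%N * z.1 + m22 A 0%N * z.2).

Lemma vat0_mapp (A : mat2 F) (v : vec F) : vat0 (mapp A v) = mul0 A (vat0 v).
Proof. by rewrite /vat0 /mapp /mul0 /ps_add /= !ps_mul0. Qed.

Lemma vat0_vscal (l : F) (v : vec F) : vat0 (vscal l v) = vat0 v.
Proof. by rewrite /vat0 /vscal /ps_scal /= !expr0 !mul1r. Qed.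

Lemma vat0_vconst (z : F * F) : vat0 (vconst z) = z.
Proof. by case: z. Qed.

Lemma mul0_frob p (A : mat2 F) z : mul0 (mat_frob p A) z = mul0 A z.
Proof. by rewrite /mul0 /mat_frob /ps_frob /= mod0n div0n. Qed.

Lemma mul0_scale (A : mat2 F) (l z1 z2 : F) :
  mul0 A (l * z1, l * z2) = (l * (mul0 A (z1, z2)).1, l * (mul0 A (z1, z2)).2).
Proof. rewrite /mul0 /=; congr pair; rewrite mulrDr !mulrA; congr (_ + _); by rewrite [_ * l]mulrC. Qed.

End Helpers.
Arguments mul0 {F}.

Lemma unit_pow (k' : finFieldType) (w : k') : w != 0 -> w ^+ (#|k'| - 1) = 1.
Proof.
move=> wnz; have hc : (0 < #|k'|)%N by apply/card_gt0P; exists 0.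
apply: (mulfI wnz); rewrite mulr1 -exprS subn1 prednK ?expf_card //.
Qed.

Lemma sig_pow (F k' : finFieldType) (sg : {rmorphism k' -> F}) (w : k') (q m n : nat) :
  w != 0 -> #|k'| = q.+1 -> m = n %[mod q] -> sg w ^+ m = sg w ^+ n.
Proof.
move=> wnz hc hmn.
have h1 : sg w ^+ q = 1.
  have -> : q = (#|k'| - 1)%N by rewrite hc subn1.
  by rewrite -rmorphXn unit_pow // rmorph1.
by rewrite -(expr_mod m h1) -(expr_mod n h1) hmn.
Qed.

Theorem lemma5p4p1
  (p f f' e : nat) (F k' : finFieldType)
  (sigma : 'I_f' -> {rmorphism k' -> F}) (cbar : k')
  (etab etab' : k' -> F) (kk kk' : 'I_f' -> nat)
  (r s c d : 'I_f' -> nat) (a b : 'I_f' -> F)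
  (x : 'I_f' -> ps F) (y : 'I_f' -> k' -> ps F) :
  prime p -> odd p -> (0 < f)%N -> (0 < e)%N ->
  #|k'| = (p ^ f')%N ->
  (forall (i : 'I_f') (z : k'), sigma (ordS i) z ^+ p = sigma i z) ->
  tame_type p f f' etab etab' ->
  (forall (i : 'I_f') (w : k'), w != 0 -> etab w = sigma i w ^+ kk i) ->
  (forall (i : 'I_f') (w : k'), w != 0 -> etab' w = sigma i w ^+ kk' i) ->
  cbar != 0 ->
  (* the pair (M(r,a,c), M(s,b,d)) has type tau *)
  (forall i : 'I_f',
     ((c i = kk i %[mod p ^ f' - 1] /\ d i = kk' i %[mod p ^ f' - 1]) \/
      (c i = kk' i %[mod p ^ f' - 1] /\ d i = kk i %[mod p ^ f' - 1])) /\
     (r i + s i = e * (p ^ f' - 1))%N) ->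
  (* its refined shape (J, r), J = {i : c_i = k_i}, is maximal *)
  maximal_shape (e * (p ^ f' - 1)) (p ^ f' - 1)
    (fun i => c i == kk i %[mod p ^ f' - 1]) r c d ->
  (* P is an extension of M(r,a,c) by M(s,b,d) *)
  is_extension p sigma r s a b c d x y ->
  forall i : 'I_f',
    ((c i == kk i %[mod p ^ f' - 1]) ->
       forall v : F * F, in_D_eta sigma c d y etab (ord_pred i) v ->
         D_F r s a b x i v = (0, 0)) /\
    (~~ (c i == kk i %[mod p ^ f' - 1]) ->
       forall W : mat2 F, is_frakV (e * (p ^ f' - 1)) r s a b x i W ->
       forall v : F * F, in_D_eta sigma c d y etab i v ->
         D_V sigma cbar i W v = (0, 0)).
Proof.
move=> pr oddp f0 e0 card hsig [[w0 w0nz hw0] _] heta heta' cnz htype hmax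
  [hab _ _ hcomm] i.
set q := (p ^ f' - 1)%N.
have f'0 : (0 < f')%N by case: i => [j hj]; lia.
have q0 : (0 < q)%N.
  rewrite /q -(prednK f'0) expnS.
  have := prime_gt1 pr; have := expn_gt0 p f'.-1; rewrite (prime_gt0 pr) /=.
  move: (p ^ f'.-1)%N => m; nia.
have cardq : #|k'| = q.+1.
  by rewrite card /q; have := expn_gt0 p f'; rewrite (prime_gt0 pr) /=; lia.
have hr : (0 < r i)%N.
  rewrite hmax; case: ifP => _; last by rewrite muln_gt0 e0.
  have : (lres_sub q (c i) (d i) < q)%N by rewrite /lres_sub ltn_pmod.
  have : (q <= e * q)%N by rewrite leq_pmull.
  rewrite -/q; lia.
have hs : (s i < e * q)%N by have := (htype i).2; lia.
have key : forall m, m = kk' i %[mod q] -> sigma i w0 ^+ m = etab' w0.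
  by move=> m hm; rewrite (heta' i) // (@sig_pow F k' (sigma i) w0 q _ _ w0nz cardq hm).
have keyk : forall m, m = kk i %[mod q] -> sigma i w0 ^+ m = etab w0.
  by move=> m hm; rewrite (heta i) // (@sig_pow F k' (sigma i) w0 q _ _ w0nz cardq hm).
have hne : etab' w0 - etab w0 != 0 by rewrite subr_eq0 eq_sym.
split.
- move=> hJ v hv.
  have hd : d i = kk' i %[mod q].
    case: (htype i) => [[[_ ->] | [h1 h2]] _] //.
    exfalso; move/negP: hw0; apply; apply/eqP.
    rewrite -(keyk (c i)) ?(key (c i)) //; exact/eqP.
  have hz : forall w, w != 0 -> mul0 (G_mat sigma c d y i w) (D_F r s a b x i v)
        = (etab w * (D_F r s a b x i v).1, etab w * (D_F r s a b x i v).2).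
    move=> w wnz.
    have := congr1 (@vat0 F) (hcomm i w (vconst v) wnz).
    rewrite /G_act /Gphi_act !vat0_mapp !vat0_vscal vat0_vconst mul0_frob => <-.
    have := hv w wnz; rewrite /G_act vat0_mapp vat0_vscal vat0_vconst => ->.
    rewrite mul0_scale /D_F vat0_mapp vat0_vconst; by case: v {hv}.
  have z2 : (D_F r s a b x i v).2 = 0.
    rewrite /D_F vat0_mapp vat0_vconst /mul0 /Phi_mat /= ps_mul0 /ps_upow.
    by rewrite eq_sym (negbTE (lt0n_neq0 hr)) !mulr0 !mul0r addr0.
  have := hz w0 w0nz; move: (D_F r s a b x i v) z2 => [z1 z2] /= -> /(congr1 fst).
  rewrite /mul0 /G_mat /= mulr0 addr0 (key _ hd).
  move/eqP; rewrite -subr_eq0 -mulrBl mulf_eq0 (negbTE hne) /= => /eqP ->.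
  by [].
- move=> hJ W hW v hv.
  have [hc hd] : c i = kk' i %[mod q] /\ d i = kk i %[mod q].
    case: (htype i) => [[[h1 h2] | //] _].
    by rewrite h1 eqxx in hJ.
  have v2 : v.2 = 0.
    have := congr1 snd (hv w0 w0nz).
    rewrite /G_act vat0_mapp vat0_vscal vat0_vconst /mul0 /G_mat /= mul0r add0r (key _ hc).
    move/eqP; rewrite -subr_eq0 -mulrBl mulf_eq0 (negbTE hne) /=; exact/eqP.
  set e1 : vec F := (ps_const 1, ps_const 0).
  set P := mapp (Phi_mat r s a b x i) e1.
  have P1 : forall k, P.1 k = if k == s i then b i else 0.
    move=> k; rewrite /P /mapp /Phi_mat /ps_add /= !ps_mul_const_r ps_mul_const_l.
    rewrite /ps_upow mulr0 addr0 mulr1; case: eqP => _; by rewrite ?mulr1 ?mulr0.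
  have P2 : forall k, P.2 k = if k == 0%N then 0 else 0.
    move=> k; rewrite /P /mapp /Phi_mat /ps_add /= !ps_mul_const_r ps_mul_const_l.
    by rewrite mulr0 addr0 mulr1 ps_const_delta; case: eqP.
  have hW1 : ps_mul (m11 W) P.1 (s i) + ps_mul (m12 W) P.2 (s i)
      = ps_mul (ps_upow F (e * q)) (ps_const 1) (s i) := congr1 (fun z => z.1 (s i)) (hW e1).
  have hW2 : ps_mul (m21 W) P.1 (s i) + ps_mul (m22 W) P.2 (s i)
      = ps_mul (ps_upow F (e * q)) (ps_const 0) (s i) := congr1 (fun z => z.2 (s i)) (hW e1).
  rewrite (@ps_mul_delta_r _ _ _ _ _ _ P1) (@ps_mul_delta_r _ _ _ _ _ _ P2)
    (@ps_mul_delta_l _ _ _ _ _ _ (ps_upow_delta F _)) leqnn leq0n subnn mulr0 addr0 in hW1.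
  rewrite (@ps_mul_delta_r _ _ _ _ _ _ P1) (@ps_mul_delta_r _ _ _ _ _ _ P2)
    (@ps_mul_delta_l _ _ _ _ _ _ (ps_upow_delta F _)) leqnn leq0n subnn mulr0 addr0 in hW2.
  move: hW1 hW2; rewrite leqNgt hs /= => /eqP; rewrite mulf_eq0 (negbTE (hab i).2) orbF => /eqP w11.
  move=> /eqP; rewrite mulf_eq0 (negbTE (hab i).2) orbF => /eqP w21.
  rewrite /D_V vat0_mapp vat0_vconst /mul0 w11 w21 v2 /=.
  rewrite !mul0r !mulr0 add0r mulr0. reflexivity.
Qed.
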